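(* Let $p\equiv 5\pmod 6$ be a prime, let $n$ be the multiplicative order of $2$ modulo $p$, and let $e$ be the multiplicative order of $p$ modulo $3n$. Then $e=2$. *)

(* Defs.v *)
From mathcomp Require Import all_boot.
Set Implicit Arguments. Unset Strict Implicit. Unset Printing Implicit Defensive.

Definition is_mult_order (a m k : nat) : Prop :=
  [/\ 0 < k, a ^ k = 1 %[mod m]
    & forall j, 0 < j -> a ^ j = 1 %[mod m] -> k <= j].

(* Main.v *)
Require Import Defs.
From mathcomp Require Import all_boot.
From mathcomp Require Import all_fingroup cyclic.

Lemma ord_dvd a m k x : is_mult_order a m k -> a ^ x = 1 %[mod m] -> k %| x.
Proof.
case=> k0 ak kmin ax.
rewrite (divn_eq x k) in ax.
rewrite /dvdn; apply/eqP.
have r0 : x %% k < k by rewrite ltn_mod.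
move: ax; rewrite expnD (mulnC (x %/ k)) expnM -modnMml -modnXm ak modnXm exp1n modnMml mul1n => ar.
case: (posnP (x %% k)) => // /kmin /(_ ar); rewrite leqNgt r0.
done.
Qed.

Lemma sq_sub1 q : q ^ 2 - 1 = q.+1 * q.-1.
Proof. case: q => // q; rewrite /= mulSn expnS expn1 mulnS; by rewrite addSn subn1. Qed.

Theorem proposition3p11 (p n e : nat) :
  prime p -> p = 5 %[mod 6] ->
  is_mult_order 2 p n -> is_mult_order p (3 * n) e ->
  e = 2.
Proof.
move=> pp p6 hn he.
have p3 : p %% 3 = 2.
  by rewrite -(modn_dvdm p (_ : 3 %| 6)) // p6.
have p2 : 2 < p.
  rewrite ltn_neqAle prime_gt1 // andbT; apply/eqP => e2.
  by rewrite -e2 in p6.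
have cop : coprime 2 p.
  by rewrite prime_coprime // dvdn_prime2 // neq_ltn p2.
have np : n %| p.-1.
  apply: (@ord_dvd 2 p n p.-1 hn).
  by rewrite -(totient_prime pp) Euler_exp_totient.
have h3 : 3 %| p.+1 by rewrite /dvdn -addn1 -modnDml p3.
have hsq : p ^ 2 = 1 %[mod 3 * n].
  apply/eqP; rewrite eqn_mod_dvd; last by rewrite expn_gt0 prime_gt0.
  have -> : p ^ 2 - 1 = p.+1 * p.-1.
    by rewrite sq_sub1.
  exact: dvdn_mul.
case: he => e0 pe emin.
have := emin 2 isT hsq.
case: e e0 pe emin => [|[|[|]]] //= _ pe _ _.
move: pe; rewrite expn1 => /(congr1 (modn^~ 3)).
by rewrite !modn_dvdm ?dvdn_mulr // p3.
Qed.
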